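(* Let $p$ be a two-phase solution and let $(x,t)$ be a point where $\nu_1(x,t)>0$. Then $\partial_x\nu_1=\partial_t\nu_1=0$ at $(x,t)$ if and only if either (i) $\mu_1,\mu_2\in\mathbb R$, or (ii) $\mu_2^*=\mu_1$.
   Context: Let $p(x,t)$, $(x,t)\in\mathbb R^2$, be a smooth complex-valued solution of the focusing nonlinear Schrödinger equation $ip_t+p_{xx}+2|p|^2p=0$; $^*$ denotes complex conjugation and subscripts denote partial derivatives. Put $\mathbb U=\begin{pmatrix}-i\lambda& ip\\ ip^*& i\lambda\end{pmatrix}$ and $\mathbb V=\begin{pmatrix}-2i\lambda^2+i|p|^2& 2i\lambda p-p_x\\ 2i\lambda p^*+p^*_x& 2i\lambda^2-i|p|^2\end{pmatrix}$. The solution $p$ is called a two-phase solution if there exist real constants $c_0,c_1,c_2$ such that the matrix $\Psi=\begin{pmatrix}\Psi_{11}&\Psi_{12}\\ \Psi_{21}&-\Psi_{11}\end{pmatrix}$ with $\Psi_{11}=-i\lambda^3-ic_2\lambda^2+(\tfrac12 i|p|^2-ic_1)\lambda+\tfrac14(pp^*_x-p_xp^* )+\tfrac12 ic_2|p|^2-ic_0$, $\Psi_{12}=ip\lambda^2+(-\tfrac12p_x+ic_2p)\lambda-\tfrac14 ip_{xx}-\tfrac12 ip|p|^2-\tfrac12c_2p_x+ic_1p$, $\Psi_{21}=ip^*\lambda^2+(\tfrac12p^*_x+ic_2p^* )\lambda-\tfrac14 ip^*_{xx}-\tfrac12 ip^*|p|^2+\tfrac12c_2p^*_x+ic_1p^*$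 satisfies $\Psi_x=[\mathbb U,\Psi]$ and $\Psi_t=[\mathbb V,\Psi]$ identically in $\lambda\in\mathbb C$. Set $\nu_1=|p|^2$. At points where $p\neq0$ the Dirichlet eigenvalues $\mu_1,\mu_2\in\mathbb C$ are defined (up to order) by $\Psi_{12}(\lambda)=ip(\lambda-\mu_1)(\lambda-\mu_2)$. *)

(* Defs.v *)
From Stdlib Require Import Reals.
Open Scope R_scope.

Definition Cpx : Type := (R * R)%type.
Definition Re (z : Cpx) : R := fst z.
Definition Im (z : Cpx) : R := snd z.
Definition RtoC (r : R) : Cpx := (r, 0).
Arguments RtoC r%_R_scope.
Definition Ci : Cpx := (0, 1).
Definition Cadd (z w : Cpx) : Cpx := (Re z + Re w, Im z + Im w).
Definition Copp (z : Cpx) : Cpx := (- Re z, - Im z).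
Definition Csub (z w : Cpx) : Cpx := Cadd z (Copp w).
Definition Cmul (z w : Cpx) : Cpx :=
  (Re z * Re w - Im z * Im w, Re z * Im w + Im z * Re w).
Definition Cconj (z : Cpx) : Cpx := (Re z, - Im z).
Definition Cnorm2 (z : Cpx) : R := Re z * Re z + Im z * Im z.

Declare Scope Cpx_scope.
Delimit Scope Cpx_scope with Cx.
Infix "+" := Cadd : Cpx_scope.
Infix "-" := Csub : Cpx_scope.
Infix "*" := Cmul : Cpx_scope.
Notation "- z" := (Copp z) : Cpx_scope.
Notation "z ^*" := (Cconj z) (at level 2, format "z ^*") : Cpx_scope.

Record Mat2 : Type := mkMat2 { m11 : Cpx; m12 : Cpx; m21 : Cpx; m22 : Cpx }.

Definition Mmul (A B : Mat2) : Mat2 :=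
  mkMat2 (m11 A * m11 B + m12 A * m21 B)%Cx (m11 A * m12 B + m12 A * m22 B)%Cx
         (m21 A * m11 B + m22 A * m21 B)%Cx (m21 A * m12 B + m22 A * m22 B)%Cx.
Definition Msub (A B : Mat2) : Mat2 :=
  mkMat2 (m11 A - m11 B)%Cx (m12 A - m12 B)%Cx (m21 A - m21 B)%Cx (m22 A - m22 B)%Cx.
Definition Mcomm (A B : Mat2) : Mat2 := Msub (Mmul A B) (Mmul B A).

Definition dx_C (f : R -> R -> Cpx) (x t : R) (d : Cpx) : Prop :=
  derivable_pt_lim (fun y => Re (f y t)) x (Re d) /\
  derivable_pt_lim (fun y => Im (f y t)) x (Im d).
Definition dt_C (f : R -> R -> Cpx) (x t : R) (d : Cpx) : Prop :=
  derivable_pt_lim (fun s => Re (f x s)) t (Re d) /\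
  derivable_pt_lim (fun s => Im (f x s)) t (Im d).

Definition dx_M (F : R -> R -> Mat2) (x t : R) (M : Mat2) : Prop :=
  dx_C (fun a b => m11 (F a b)) x t (m11 M) /\ dx_C (fun a b => m12 (F a b)) x t (m12 M) /\
  dx_C (fun a b => m21 (F a b)) x t (m21 M) /\ dx_C (fun a b => m22 (F a b)) x t (m22 M).
Definition dt_M (F : R -> R -> Mat2) (x t : R) (M : Mat2) : Prop :=
  dt_C (fun a b => m11 (F a b)) x t (m11 M) /\ dt_C (fun a b => m12 (F a b)) x t (m12 M) /\
  dt_C (fun a b => m21 (F a b)) x t (m21 M) /\ dt_C (fun a b => m22 (F a b)) x t (m22 M).

Definition smooth_derivs (p : R -> R -> Cpx) (D : nat -> nat -> R -> R -> Cpx) : Prop :=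
  D 0%nat 0%nat = p /\
  forall (i j : nat) (x t : R),
    dx_C (D i j) x t (D (S i) j x t) /\ dt_C (D i j) x t (D i (S j) x t).

Definition NLS (p : R -> R -> Cpx) (D : nat -> nat -> R -> R -> Cpx) : Prop :=
  forall x t : R,
    (Ci * D 0%nat 1%nat x t + D 2%nat 0%nat x t + RtoC ((2 * Cnorm2 (p x t))%R) * p x t)%Cx = RtoC 0.

(** * Lax matrices; p, px, pxx are the values of p, p_x, p_xx at the point *)
Definition UM (lam p : Cpx) : Mat2 :=
  mkMat2 (- (Ci * lam))%Cx (Ci * p)%Cx (Ci * p^*)%Cx (Ci * lam)%Cx.

Definition VM (lam p px : Cpx) : Mat2 :=
  mkMat2 (- (RtoC 2 * Ci * lam * lam) + Ci * RtoC (Cnorm2 p))%Cx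
         (RtoC 2 * Ci * lam * p - px)%Cx
         (RtoC 2 * Ci * lam * p^* + px^*)%Cx
         (RtoC 2 * Ci * lam * lam - Ci * RtoC (Cnorm2 p))%Cx.

Definition Psi11 (c0 c1 c2 : R) (p px : Cpx) (lam : Cpx) : Cpx :=
  (- (Ci * lam * lam * lam) - Ci * RtoC c2 * lam * lam
   + (RtoC ((1/2)%R) * Ci * RtoC (Cnorm2 p) - Ci * RtoC c1) * lam
   + RtoC ((1/4)%R) * (p * px^* - px * p^*)
   + RtoC ((1/2)%R) * Ci * RtoC c2 * RtoC (Cnorm2 p) - Ci * RtoC c0)%Cx.

Definition Psi12 (c0 c1 c2 : R) (p px pxx : Cpx) (lam : Cpx) : Cpx :=
  (Ci * p * lam * lam + (- (RtoC ((1/2)%R) * px) + Ci * RtoC c2 * p) * lam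
   - RtoC ((1/4)%R) * Ci * pxx - RtoC ((1/2)%R) * Ci * p * RtoC (Cnorm2 p)
   - RtoC ((1/2)%R) * RtoC c2 * px + Ci * RtoC c1 * p)%Cx.

Definition Psi21 (c0 c1 c2 : R) (p px pxx : Cpx) (lam : Cpx) : Cpx :=
  (Ci * p^* * lam * lam + (RtoC ((1/2)%R) * px^* + Ci * RtoC c2 * p^*) * lam
   - RtoC ((1/4)%R) * Ci * pxx^* - RtoC ((1/2)%R) * Ci * p^* * RtoC (Cnorm2 p)
   + RtoC ((1/2)%R) * RtoC c2 * px^* + Ci * RtoC c1 * p^*)%Cx.

Definition PsiM (c0 c1 c2 : R) (p px pxx : Cpx) (lam : Cpx) : Mat2 :=
  mkMat2 (Psi11 c0 c1 c2 p px lam) (Psi12 c0 c1 c2 p px pxx lam)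
         (Psi21 c0 c1 c2 p px pxx lam) (- Psi11 c0 c1 c2 p px lam)%Cx.

Definition PsiF (c0 c1 c2 : R) (D : nat -> nat -> R -> R -> Cpx) (lam : Cpx)
  : R -> R -> Mat2 :=
  fun x t => PsiM c0 c1 c2 (D 0%nat 0%nat x t) (D 1%nat 0%nat x t) (D 2%nat 0%nat x t) lam.

Definition two_phase_with (c0 c1 c2 : R) (D : nat -> nat -> R -> R -> Cpx) : Prop :=
  forall (lam : Cpx) (x t : R),
    dx_M (PsiF c0 c1 c2 D lam) x t
         (Mcomm (UM lam (D 0%nat 0%nat x t)) (PsiF c0 c1 c2 D lam x t)) /\
    dt_M (PsiF c0 c1 c2 D lam) x t
         (Mcomm (VM lam (D 0%nat 0%nat x t) (D 1%nat 0%nat x t)) (PsiF c0 c1 c2 D lam x t)).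

Definition nu1 (p : R -> R -> Cpx) (x t : R) : R := Cnorm2 (p x t).

(* Main.v *)
Require Import Defs.
From Stdlib Require Import Reals Lra Psatz.
Open Scope R_scope.

Lemma sq_deriv (f g : R -> R) (x a b : R) :
  derivable_pt_lim f x a -> derivable_pt_lim g x b ->
  derivable_pt_lim (fun y => f y * f y + g y * g y) x (2 * (f x * a + g x * b)).
Proof.
  intros Hf Hg.
  replace (2 * (f x * a + g x * b)) with ((a * f x + f x * a) + (b * g x + g x * b)) by ring.
  apply (derivable_pt_lim_plus (fun y => f y * f y) (fun y => g y * g y));
  apply derivable_pt_lim_mult; assumption.
Qed.

Lemma deriv0_iff (h : R -> R) (x v : R) :
  derivable_pt_lim h x v -> (derivable_pt_lim h x 0 <-> v = 0).
Proof.
  intros H; split; intro H0.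
  - exact (uniqueness_limite h x v 0 H H0).
  - subst; exact H.
Qed.

Theorem mainTheorem5
  (p : R -> R -> Cpx) (D : nat -> nat -> R -> R -> Cpx) (c0 c1 c2 : R)
  (Hsmooth : smooth_derivs p D) (Hnls : NLS p D)
  (Htwo : two_phase_with c0 c1 c2 D)
  (x t : R) (Hpos : 0 < nu1 p x t)
  (mu1 mu2 : Cpx)
  (Hmu : forall lam : Cpx,
      Psi12 c0 c1 c2 (p x t) (D 1%nat 0%nat x t) (D 2%nat 0%nat x t) lam
      = (Ci * p x t * (lam - mu1) * (lam - mu2))%Cx) :
  (derivable_pt_lim (fun y => nu1 p y t) x 0 /\
   derivable_pt_lim (fun s => nu1 p x s) t 0)
  <-> ((Im mu1 = 0 /\ Im mu2 = 0) \/ Cconj mu2 = mu1).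
Proof.
  destruct Hsmooth as [HD0 Hd].
  destruct (Hd 0%nat 0%nat x t) as [[Hxr Hxi] [Htr Hti]].
  rewrite HD0 in Hxr, Hxi, Htr, Hti.
  pose proof (sq_deriv _ _ _ _ _ Hxr Hxi) as Dx.
  pose proof (sq_deriv _ _ _ _ _ Htr Hti) as Dt.
  simpl in Dx, Dt.
  change (fun y => nu1 p y t) with (fun y => Re (p y t) * Re (p y t) + Im (p y t) * Im (p y t)).
  change (fun s => nu1 p x s) with (fun s => Re (p x s) * Re (p x s) + Im (p x s) * Im (p x s)).
  rewrite (deriv0_iff _ _ _ Dx), (deriv0_iff _ _ _ Dt).
  pose proof (Hnls x t) as N.
  pose proof (Hmu (0,0)) as M0. pose proof (Hmu (1,0)) as M1. pose proof (Hmu (-1,0)) as M2.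
  unfold nu1, Cnorm2 in Hpos.
  destruct (p x t) as [a b]. destruct (D 1%nat 0%nat x t) as [c d].
  destruct (D 2%nat 0%nat x t) as [e f]. destruct (D 0%nat 1%nat x t) as [g h].
  destruct mu1 as [u1 v1], mu2 as [u2 v2].
  unfold NLS, Psi12, Cnorm2, Cmul, Cadd, Csub, Copp, Cconj, RtoC, Ci, Re, Im in *; simpl in *.
  injection N as N1 N2. injection M0 as A1 A2. injection M1 as B1 B2. injection M2 as C1 C2.
  set (n := a*a+b*b) in *.
  assert (K1 : n*(v1+v2) = -(a*c+b*d)/2).
  { pose proof (f_equal (Rmult a) B1). pose proof (f_equal (Rmult a) C1).
    pose proof (f_equal (Rmult b) B2). pose proof (f_equal (Rmult b) C2).
    unfold n; lra. }
  assert (K2 : n*(u1*v2+v1*u2) = (b*e-a*f)/4 + c2*(a*c+b*d)/2).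
  { pose proof (f_equal (Rmult a) A1). pose proof (f_equal (Rmult b) A2).
    unfold n; lra. }
  assert (K3 : a*g+b*h = b*e-a*f).
  { pose proof (f_equal (Rmult a) N1). pose proof (f_equal (Rmult b) N2). nra. }
  rewrite K3. clear - K1 K2 Hpos.
  split.
  - intros [H1 H2].
    assert (S : v1+v2 = 0).
    { assert (Z : n*(v1+v2) = 0) by (rewrite K1; lra).
      destruct (Rmult_integral _ _ Z); lra. }
    assert (P : u1*v2+v1*u2 = 0).
    { assert (Z : n*(u1*v2+v1*u2) = 0).
      { rewrite K2. replace (b*e-a*f) with 0 by lra. replace (a*c+b*d) with 0 by lra. lra. }
      destruct (Rmult_integral _ _ Z); lra. }
    assert (v2 = -v1) by lra. subst v2.
    assert (Q : v1*(u2-u1) = 0) by lra.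
    destruct (Rmult_integral _ _ Q) as [Q1|Q1].
    + left; lra.
    + right. f_equal; lra.
  - intros [[H1 H2]|H].
    + subst. split.
      * assert (a*c+b*d = 0) by lra. lra.
      * assert (Y : a*c+b*d = 0) by lra. assert (c2*(a*c+b*d) = 0) by (rewrite Y; ring). lra.
    + injection H as H1 H2. subst u2. assert (v2 = -v1) by lra. subst v2. split.
      * assert (a*c+b*d = 0) by lra. lra.
      * assert (Y : a*c+b*d = 0) by lra. assert (c2*(a*c+b*d) = 0) by (rewrite Y; ring). lra.
Qed.
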